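(* There exists a constant $B_3>0$ depending only on $d$ such that for all $p\in(1,\infty)$, $\alpha\in(0,d/p)$ and $q\in[p,\infty)$ with $\frac1q=\frac1p-\frac\alpha d$, \[ \frac{1}{B_3}S(p,q)\le\widetilde E_H(p,q,d)\le B_3\,S(p,q), \qquad\text{where } S(p,q)=\min\Big(\frac{q^{1/p'}}{p-1},\frac{{p'}^{1/q}}{q'-1}\Big). \]
   Context: Here $d\in\mathbb{N}^*$, $p'=p/(p-1)$, $q'=q/(q-1)$, $\omega_{d-1}$ is the surface measure of the unit sphere in $\mathbb{R}^d$, and \[ \widetilde E_H(p,q,d)=\frac{1}{(2\pi)^\alpha}\frac{\Gamma((d-\alpha)/2)}{\Gamma(\alpha/2)}\frac d\alpha\Big(\frac{\omega_{d-1}}{d}\Big)^{1-\frac\alpha d}\Big(1-\frac\alpha d\Big)^{1-\frac\alpha d}\frac{1}{pq'}\Big({p'}^{\frac1{p'}+\frac1q}+q^{\frac1{p'}+\frac1q}\Big). \] (This is Lieb's upper bound for the best constant of the homogeneous Sobolev embedding $\|\Delta^{-\alpha/2}f\|_{L^q(\mathbb{R}^d)}\le C\|f\|_{L^p(\mathbb{R}^d)}$.) *)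

(* Defs.v *)
From Stdlib Require Import Reals.
From Coquelicot Require Import Coquelicot.
Open Scope R_scope.

(* Euler's Gamma function, Gamma(s) = int_0^oo t^(s-1) e^(-t) dt
   (improper Riemann integral; used only for s > 0, where it converges). *)
Definition Gamma (s : R) : R :=
  RInt_gen (fun t => Rpower t (s - 1) * exp (- t)) (at_right 0) (Rbar_locally p_infty).

Definition omega_sphere (d : nat) : R :=
  2 * Rpower PI (INR d / 2) / Gamma (INR d / 2).

Definition conj_exp (p : R) : R := p / (p - 1).

(* Lieb's upper bound tilde E_H(p,q,d); alpha is determined by 1/q = 1/p - alpha/d
   and is passed explicitly. *)
Definition E_H_tilde (alpha p q : R) (d : nat) : R :=
  let dd := INR d in
  let p' := conj_exp p in
  let q' := conj_exp q in
  / Rpower (2 * PI) alpha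
  * (Gamma ((dd - alpha) / 2) / Gamma (alpha / 2))
  * (dd / alpha)
  * Rpower (omega_sphere d / dd) (1 - alpha / dd)
  * Rpower (1 - alpha / dd) (1 - alpha / dd)
  * / (p * q')
  * (Rpower p' (/ p' + / q) + Rpower q (/ p' + / q)).

Definition S_pq (p q : R) : R :=
  Rmin (Rpower q (/ conj_exp p) / (p - 1))
       (Rpower (conj_exp p) (/ q) / (conj_exp q - 1)).

(* Main.v *)
Require Import Defs.
From Stdlib Require Import Reals Lra.
From Coquelicot Require Import Coquelicot.
From Stdlib Require Import Lia.
Open Scope R_scope.

Lemma exdc (f : R -> R) x : ex_derive f x -> continuous f x.
Proof. intros H. exact (ex_derive_continuous (K:=R_AbsRing) (V:=R_NormedModule) f x H). Qed.

Definition gf (s t : R) : R := Rpower t (s - 1) * exp (- t).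

Lemma Rpower_ex_derive y x : 0 < x -> is_derive (fun t => Rpower t y) x (y * Rpower x (y - 1)).
Proof. intros Hx. apply is_derive_Reals. now apply derivable_pt_lim_power. Qed.

Lemma Rpower_cont y x : 0 < x -> continuous (fun t => Rpower t y) x.
Proof. intros Hx. apply exdc. eexists. now apply Rpower_ex_derive. Qed.

Lemma gf_cont s x : 0 < x -> continuous (gf s) x.
Proof.
  intros Hx. unfold gf. apply (continuous_mult (fun t => Rpower t (s-1)) (fun t => exp (-t))).
  - now apply Rpower_cont.
  - apply exdc. auto_derive. auto.
Qed.

Lemma gf_ex_RInt s a b : 0 < a -> 0 < b -> ex_RInt (gf s) a b.
Proof.
  intros Ha Hb. apply (ex_RInt_continuous (V:=R_CompleteNormedModule)). intros z Hz. apply gf_cont.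
  assert (0 < Rmin a b) by (apply Rmin_glb_lt; auto). lra.
Qed.

Lemma pow_is_RInt s a b : 0 < s -> 0 < a -> 0 < b ->
  is_RInt (fun t => Rpower t (s-1)) a b ((Rpower b s - Rpower a s) / s).
Proof.
  intros Hs Ha Hb.
  assert (Hm : 0 < Rmin a b) by (apply Rmin_glb_lt; auto).
  replace ((Rpower b s - Rpower a s) / s) with
    (minus ((fun t => Rpower t s / s) b) ((fun t => Rpower t s / s) a))
    by (unfold minus, plus, opp; simpl; field; lra).
  apply (is_RInt_derive (V:=R_CompleteNormedModule) (fun t => Rpower t s / s)).
  - intros x Hx. 
    replace (Rpower x (s-1)) with (/s * (s * Rpower x (s-1))) by (field; lra).
    apply (is_derive_ext (fun t => /s * Rpower t s)). { intros; simpl. unfold Rdiv. ring. }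
    apply (is_derive_scal (fun t => Rpower t s)). apply Rpower_ex_derive. lra.
  - intros x Hx. apply Rpower_cont. lra.
Qed.

Lemma exp_is_RInt a b :
  is_RInt (fun t => exp (- t / 2)) a b (2 * (exp (- a / 2) - exp (- b / 2))).
Proof.
  replace (2 * (exp (- a / 2) - exp (- b / 2))) with
    (minus ((fun t => -2 * exp (- t / 2)) b) ((fun t => -2 * exp (- t / 2)) a))
    by (unfold minus, plus, opp; simpl; ring).
  apply (is_RInt_derive (V:=R_CompleteNormedModule) (fun t => -2 * exp (- t / 2))).
  - intros x Hx. auto_derive; auto. unfold Rdiv. set (E := exp _). field.
  - intros y Hy. apply exdc. auto_derive. auto.
Qed.
Lemma expl x y : x <= y -> exp x <= exp y.
Proof. intros H. destruct (Rle_lt_or_eq_dec _ _ H) as [H1|H1]. left; now apply exp_increasing. subst; lra. Qed.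

Lemma ln_le_sub1 z : 0 < z -> ln z <= z - 1.
Proof.
  intros Hz. assert (H := exp_ineq1_le (z - 1)).
  rewrite <- (ln_exp (z - 1)). apply ln_le; lra.
Qed.

Lemma mlnm m : 0 < m <= 1 -> - (m * ln m) <= 1 - m.
Proof.
  intros Hm. assert (H := ln_le_sub1 (/ m) ltac:(apply Rinv_0_lt_compat; lra)).
  rewrite ln_Rinv in H by lra.
  assert (m * (- ln m) <= m * (/ m - 1)) by (apply Rmult_le_compat_l; lra).
  replace (m * (/ m - 1)) with (1 - m) in H0 by (field; lra). lra.
Qed.

Definition Cst (K : R) := exp (K * ln (2 * K) - K).

Lemma gf_pos s t : 0 < gf s t.
Proof. unfold gf, Rpower. apply Rmult_lt_0_compat; apply exp_pos. Qed.

Lemma gf_bound_inf K s t : 0 < s <= K -> 1 <= t -> gf s t <= Cst K * exp (- t / 2).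
Proof.
  intros Hs Ht. unfold gf, Rpower, Cst. rewrite <- !exp_plus. apply expl.
  assert (Hl : 0 <= ln t) by (rewrite <- ln_1; apply ln_le; lra).
  assert (H1 : (s - 1) * ln t <= K * ln t) by (apply Rmult_le_compat_r; lra).
  assert (H2 := ln_le_sub1 (t / (2 * K)) ltac:(apply Rdiv_lt_0_compat; lra)).
  rewrite ln_div in H2 by lra.
  assert (H3 : K * (ln t - ln (2 * K)) <= K * (t / (2 * K) - 1)) by (apply Rmult_le_compat_l; lra).
  replace (K * (t / (2 * K) - 1)) with (t / 2 - K) in H3 by (field; lra).
  lra.
Qed.

Lemma gf_01 s t : 0 < t <= 1 -> exp (-1) * Rpower t (s - 1) <= gf s t <= Rpower t (s - 1).
Proof.
  intros Ht. unfold gf. assert (0 < Rpower t (s-1)) by (unfold Rpower; apply exp_pos).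
  split.
  - rewrite Rmult_comm. apply Rmult_le_compat_l; [lra|]. apply expl; lra.
  - rewrite <- (Rmult_1_r (Rpower t (s-1))) at 2. apply Rmult_le_compat_l; [lra|].
    rewrite <- exp_0. apply expl; lra.
Qed.

Lemma is_RInt_scalR f a b k l : is_RInt f a b l -> is_RInt (fun t => k * f t) a b (k * l).
Proof. intros H. apply (is_RInt_scal f a b k l H). Qed.

Lemma RInt_01 s a b : 0 < s -> 0 < a <= b -> b <= 1 ->
  exp (-1) * ((Rpower b s - Rpower a s) / s) <= RInt (gf s) a b <= (Rpower b s - Rpower a s) / s.
Proof.
  intros Hs Hab Hb.
  assert (I1 := pow_is_RInt s a b Hs ltac:(lra) ltac:(lra)).
  assert (I2 := is_RInt_scalR _ _ _ (exp (-1)) _ I1).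
  split.
  - rewrite <- (is_RInt_unique _ _ _ _ I2). apply RInt_le; try lra.
    + eexists; exact I2.
    + apply gf_ex_RInt; lra.
    + intros x Hx. apply gf_01; lra.
  - rewrite <- (is_RInt_unique _ _ _ _ I1). apply RInt_le; try lra.
    + apply gf_ex_RInt; lra.
    + eexists; exact I1.
    + intros x Hx. apply gf_01; lra.
Qed.

Lemma RInt_inf K s a b : 0 < s <= K -> 1 <= a <= b ->
  0 <= RInt (gf s) a b <= Cst K * (2 * (exp (- a / 2) - exp (- b / 2))).
Proof.
  intros Hs Hab.
  assert (I1 := exp_is_RInt a b).
  assert (I2 := is_RInt_scalR _ _ _ (Cst K) _ I1).
  split.
  - apply RInt_ge_0; try lra. apply gf_ex_RInt; lra. intros x Hx. left; apply gf_pos.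
  - rewrite <- (is_RInt_unique _ _ _ _ I2). apply RInt_le; try lra.
    + apply gf_ex_RInt; lra.
    + eexists; exact I2.
    + intros x Hx. apply gf_bound_inf; lra.
Qed.
Definition Fn s x := RInt (gf s) 1 x.

Lemma Fn_diff s u v : 0 < u -> 0 < v -> Fn s u - Fn s v = RInt (gf s) v u.
Proof.
  intros Hu Hv. unfold Fn.
  assert (H := RInt_Chasles (V:=R_CompleteNormedModule) (gf s) 1 v u
     (gf_ex_RInt s 1 v ltac:(lra) Hv) (gf_ex_RInt s v u Hv Hu)).
  rewrite <- H. unfold plus; simpl. ring.
Qed.

Lemma Rpower_pos a b : 0 < Rpower a b.
Proof. unfold Rpower; apply exp_pos. Qed.

Lemma Fn_cauchy0 s : 0 < s -> exists l, filterlim (Fn s) (at_right 0) (locally l).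
Proof.
  intros Hs. apply (filterlim_locally_cauchy (U:=R_CompleteSpace)). intros eps.
  assert (Hd : 0 < Rmin 1 (Rpower (eps * s) (/ s))).
  { apply Rmin_glb_lt; [lra| apply Rpower_pos]. }
  set (d := Rmin 1 (Rpower (eps * s) (/ s))) in *.
  assert (Hw : forall w, 0 < w < d -> Rpower w s < eps * s).
  { intros w Hw. apply Rlt_le_trans with (Rpower d s).
    apply Rlt_Rpower_l; lra.
    apply Rle_trans with (Rpower (Rpower (eps * s) (/ s)) s).
    apply Rle_Rpower_l; [lra|]. split; [lra|]. apply Rmin_r.
    rewrite Rpower_mult. replace (/ s * s) with 1 by (field; lra).
    rewrite Rpower_1. lra. assert (0 < eps) by apply cond_pos. nra. }
  assert (Hd1 : d <= 1) by apply Rmin_l.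
  exists (fun y => 0 < y < d). split.
  - exists (mkposreal d Hd). intros y Hy Hy0. simpl.
    change (Rabs (y - 0) < d) in Hy. split; [lra|]. rewrite Rminus_0_r in Hy.
    apply Rabs_def2 in Hy. lra.
  - assert (Hk : forall u v, 0 < u < d -> 0 < v < d -> u <= v -> Rabs (Fn s v - Fn s u) < eps).
    { intros u v Hu Hv Huv. rewrite Fn_diff by lra.
      destruct (RInt_01 s u v Hs ltac:(lra) ltac:(lra)) as [_ H2].
      assert (H3 := RInt_ge_0 (gf s) u v Huv (gf_ex_RInt s u v ltac:(lra) ltac:(lra))
        (fun x _ => Rlt_le _ _ (gf_pos s x))).
      rewrite Rabs_pos_eq by lra.
      assert (H4 := Hw v Hv). assert (H5 := Rpower_pos u s).
      apply Rle_lt_trans with (1 := H2). apply Rmult_lt_reg_r with s; auto.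
      unfold Rdiv. rewrite Rmult_assoc, Rinv_l by lra. lra. }
    intros u v Hu Hv. change (Rabs (Fn s v - Fn s u) < eps).
    destruct (Rle_dec u v) as [H|H]. now apply Hk.
    rewrite Rabs_minus_sym. apply Hk; auto; lra.
Qed.

Lemma Fn_cauchy_inf s : 0 < s -> exists l, filterlim (Fn s) (Rbar_locally p_infty) (locally l).
Proof.
  intros Hs. apply (filterlim_locally_cauchy (U:=R_CompleteSpace)). intros eps.
  assert (He : 0 < eps) by apply cond_pos.
  assert (HC : 0 < Cst s) by (unfold Cst; apply exp_pos).
  set (M := Rmax 1 (2 * ln (2 * Cst s / eps))).
  assert (HM : forall w, M < w -> 2 * Cst s * exp (- w / 2) < eps).
  { intros w Hw. assert (H1 : 2 * ln (2 * Cst s / eps) < w).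
    { apply Rle_lt_trans with M; auto. apply Rmax_r. }
    assert (H2 : exp (- w / 2) < exp (- ln (2 * Cst s / eps))) by (apply exp_increasing; lra).
    rewrite <- ln_Rinv, exp_ln in H2.
    2: { apply Rinv_0_lt_compat. apply Rdiv_lt_0_compat; lra. }
    2: { apply Rdiv_lt_0_compat; lra. }
    apply Rlt_le_trans with (2 * Cst s * / (2 * Cst s / eps)).
    apply Rmult_lt_compat_l; lra. right; field; lra. }
  exists (fun y => M < y). split.
  - exists M. auto.
  - assert (Hk : forall u v, M < u -> M < v -> u <= v -> Rabs (Fn s v - Fn s u) < eps).
    { intros u v Hu Hv Huv. assert (HM1 : 1 <= M) by apply Rmax_l.
      rewrite Fn_diff by lra.
      destruct (RInt_inf s s u v ltac:(lra) ltac:(lra)) as [H1 H2].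
      rewrite Rabs_pos_eq by lra.
      assert (H4 := HM u Hu). assert (H5 := exp_pos (- v / 2)). nra. }
    intros u v Hu Hv. change (Rabs (Fn s v - Fn s u) < eps).
    destruct (Rle_dec u v) as [H|H]. now apply Hk.
    rewrite Rabs_minus_sym. apply Hk; auto; lra.
Qed.
Lemma Fn_derive s x : 0 < x -> is_derive (Fn s) x (gf s x).
Proof.
  intros Hx. apply (is_derive_RInt (V:=R_NormedModule) (gf s) (Fn s) 1 x).
  - exists (mkposreal (x/2) ltac:(lra)). intros y Hy. change (Rabs (y - x) < x/2) in Hy.
    apply Rabs_def2 in Hy. unfold Fn. apply (RInt_correct (V:=R_CompleteNormedModule)).
    apply gf_ex_RInt; lra.
  - now apply gf_cont.
Qed.

Lemma Fn_Derive s x : 0 < x -> Derive (Fn s) x = gf s x.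
Proof. intros Hx. apply is_derive_unique. now apply Fn_derive. Qed.

Lemma Fn_Derive_cont s x : 0 < x -> continuous (Derive (Fn s)) x.
Proof.
  intros Hx. apply (continuous_ext_loc (T:=R_UniformSpace) (U:=R_UniformSpace) (Derive (Fn s)) (gf s)).
  - exists (mkposreal (x/2) ltac:(lra)). intros y Hy. change (Rabs (y - x) < x/2) in Hy.
    apply Rabs_def2 in Hy. rewrite Fn_Derive; auto; lra.
  - now apply gf_cont.
Qed.

Lemma Gamma_eq s : 0 < s -> exists la lb, filterlim (Fn s) (at_right 0) (locally la) /\
  filterlim (Fn s) (Rbar_locally p_infty) (locally lb) /\ Gamma s = lb - la.
Proof.
  intros Hs. destruct (Fn_cauchy0 s Hs) as [la Hla]. destruct (Fn_cauchy_inf s Hs) as [lb Hlb].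
  exists la, lb. split; [auto|split; [auto|]].
  unfold Gamma. change (fun t => Rpower t (s - 1) * exp (- t)) with (gf s).
  apply (is_RInt_gen_unique (V:=R_CompleteNormedModule)).
  assert (Hmin : forall a b x, 0 < a < 1 -> 1 < b -> Rmin a b <= x <= Rmax a b -> 0 < x).
  { intros a b x Ha Hb Hx. rewrite Rmin_left in Hx by lra. lra. }
  apply (is_RInt_gen_ext (Derive (Fn s))).
  - apply (Filter_prod _ _ _ (fun a => 0 < a < 1) (fun b => 1 < b)).
    + exists (mkposreal 1 Rlt_0_1). intros y Hy Hy0. change (Rabs (y - 0) < 1) in Hy.
      rewrite Rminus_0_r in Hy. apply Rabs_def2 in Hy. simpl; lra.
    + exists 1. auto.
    + intros a b Ha Hb x Hx. simpl in Hx. apply Fn_Derive. apply (Hmin a b); auto; lra.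
  - apply is_RInt_gen_Derive; auto.
    + apply (Filter_prod _ _ _ (fun a => 0 < a < 1) (fun b => 1 < b)).
      * exists (mkposreal 1 Rlt_0_1). intros y Hy Hy0. change (Rabs (y - 0) < 1) in Hy.
        rewrite Rminus_0_r in Hy. apply Rabs_def2 in Hy. simpl; lra.
      * exists 1. auto.
      * intros a b Ha Hb x Hx. simpl in Hx. eexists. apply Fn_derive. apply (Hmin a b); auto.
    + apply (Filter_prod _ _ _ (fun a => 0 < a < 1) (fun b => 1 < b)).
      * exists (mkposreal 1 Rlt_0_1). intros y Hy Hy0. change (Rabs (y - 0) < 1) in Hy.
        rewrite Rminus_0_r in Hy. apply Rabs_def2 in Hy. simpl; lra.
      * exists 1. auto.
      * intros a b Ha Hb x Hx. simpl in Hx. apply Fn_Derive_cont. apply (Hmin a b); auto.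
Qed.
Lemma lim_le {F : (R -> Prop) -> Prop} {FF : ProperFilter F} (g : R -> R) l c :
  filterlim g F (locally l) -> F (fun x => g x <= c) -> l <= c.
Proof.
  intros Hl Hc. destruct (Rle_dec l c) as [H|H]; auto. exfalso.
  assert (He : 0 < l - c) by lra.
  assert (Hb := proj1 (filterlim_locally g l) Hl (mkposreal _ He)).
  destruct (filter_ex _ (filter_and _ _ Hb Hc)) as [x [Hx1 Hx2]].
  change (Rabs (g x - l) < l - c) in Hx1. apply Rabs_def2 in Hx1. lra.
Qed.

Lemma lim_ge {F : (R -> Prop) -> Prop} {FF : ProperFilter F} (g : R -> R) l c :
  filterlim g F (locally l) -> F (fun x => c <= g x) -> c <= l.
Proof.
  intros Hl Hc. destruct (Rle_dec c l) as [H|H]; auto. exfalso.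
  assert (He : 0 < c - l) by lra.
  assert (Hb := proj1 (filterlim_locally g l) Hl (mkposreal _ He)).
  destruct (filter_ex _ (filter_and _ _ Hb Hc)) as [x [Hx1 Hx2]].
  change (Rabs (g x - l) < c - l) in Hx1. apply Rabs_def2 in Hx1. lra.
Qed.

Lemma Fn_neg s a : 0 < a -> Fn s a = - RInt (gf s) a 1.
Proof.
  intros Ha. unfold Fn. rewrite <- (opp_RInt_swap (V:=R_CompleteNormedModule)).
  reflexivity. apply gf_ex_RInt; lra.
Qed.

Lemma Rpower_1_base s : Rpower 1 s = 1.
Proof. unfold Rpower. rewrite ln_1, Rmult_0_r. apply exp_0. Qed.

Lemma Gamma_bounds K s : 0 < K -> 0 < s <= K ->
  exp (-1) / 2 / s <= Gamma s <= (2 * Cst K * K + 1) / s.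
Proof.
  intros HK Hs. destruct (Gamma_eq s ltac:(lra)) as [la [lb [Hla [Hlb HG]]]].
  rewrite HG.
  assert (HC : 0 < Cst K) by (unfold Cst; apply exp_pos).
  assert (Hb1 : lb <= 2 * Cst K).
  { apply (lim_le (Fn s) lb _ Hlb). exists 1. intros b Hb.
    unfold Fn. destruct (RInt_inf K s 1 b Hs ltac:(lra)) as [_ H].
    assert (exp (- (1) / 2) <= 1) by (apply Rle_trans with (exp 0); [apply expl; lra| rewrite exp_0; lra]).
    assert (0 < exp (- b / 2)) by apply exp_pos. nra. }
  assert (Hb0 : 0 <= lb).
  { apply (lim_ge (Fn s) lb _ Hlb). exists 1. intros b Hb.
    unfold Fn. destruct (RInt_inf K s 1 b Hs ltac:(lra)) as [H _]. exact H. }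
  assert (Ha1 : - / s <= la).
  { apply (lim_ge (Fn s) la _ Hla). exists (mkposreal 1 Rlt_0_1). intros y Hy Hy0.
    change (Rabs (y - 0) < 1) in Hy. rewrite Rminus_0_r in Hy. apply Rabs_def2 in Hy.
    rewrite Fn_neg by lra.
    destruct (RInt_01 s y 1 ltac:(lra) ltac:(lra) ltac:(lra)) as [_ H].
    rewrite Rpower_1_base in H. assert (0 < Rpower y s) by apply Rpower_pos.
    assert ((1 - Rpower y s) / s <= 1 / s).
    { unfold Rdiv. apply Rmult_le_compat_r. left; apply Rinv_0_lt_compat; lra. lra. }
    unfold Rdiv in *. rewrite Rmult_1_l in *.
    lra. }
  assert (Ha2 : la <= - (exp (-1) / 2 / s)).
  { apply (lim_le (Fn s) la _ Hla).
    assert (Hd : 0 < Rmin 1 (Rpower (/ 2) (/ s))).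
    { apply Rmin_glb_lt; [lra| apply Rpower_pos]. }
    exists (mkposreal _ Hd). intros y Hy Hy0.
    change (Rabs (y - 0) < Rmin 1 (Rpower (/ 2) (/ s))) in Hy. rewrite Rminus_0_r in Hy.
    apply Rabs_def2 in Hy.
    assert (Hy1 : y <= 1) by (assert (H := Rmin_l 1 (Rpower (/ 2) (/ s))); lra).
    assert (Hys : Rpower y s <= / 2).
    { apply Rle_trans with (Rpower (Rpower (/ 2) (/ s)) s).
      apply Rle_Rpower_l; [lra|]. split; [lra|]. assert (H := Rmin_r 1 (Rpower (/ 2) (/ s))); lra.
      rewrite Rpower_mult. replace (/ s * s) with 1 by (field; lra). rewrite Rpower_1; lra. }
    rewrite Fn_neg by lra.
    destruct (RInt_01 s y 1 ltac:(lra) ltac:(lra) ltac:(lra)) as [H _].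
    rewrite Rpower_1_base in H.
    assert (/ 2 / s <= (1 - Rpower y s) / s).
    { unfold Rdiv. apply Rmult_le_compat_r. left; apply Rinv_0_lt_compat; lra. lra. }
    assert (0 < exp (-1)) by apply exp_pos.
    assert (exp (-1) * (/ 2 / s) <= exp (-1) * ((1 - Rpower y s) / s)) by (apply Rmult_le_compat_l; lra).
    replace (exp (-1) / 2 / s) with (exp (-1) * (/ 2 / s)) by (field; lra). lra. }
  split.
  - lra.
  - assert (2 * Cst K <= 2 * Cst K * K / s).
    { apply Rmult_le_reg_r with s; [lra|]. replace (2 * Cst K * K / s * s) with (2 * Cst K * K) by (field; lra). nra. }
    replace ((2 * Cst K * K + 1) / s) with (2 * Cst K * K / s + / s) by (field; lra). lra.
Qed.
Open Scope R_scope.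

Lemma expl' x y : x <= y -> exp x <= exp y.
Proof. intros H. destruct (Rle_lt_or_eq_dec _ _ H) as [H1|H1]. left; now apply exp_increasing. subst; lra. Qed.

Lemma ln_le_sub1' z : 0 < z -> ln z <= z - 1.
Proof.
  intros Hz. assert (H := exp_ineq1_le (z - 1)).
  rewrite <- (ln_exp (z - 1)). apply ln_le; lra.
Qed.

Lemma mlnm' m : 0 < m <= 1 -> - (m * ln m) <= 1 - m.
Proof.
  intros Hm. assert (H := ln_le_sub1' (/ m) ltac:(apply Rinv_0_lt_compat; lra)).
  rewrite ln_Rinv in H by lra.
  assert (m * (- ln m) <= m * (/ m - 1)) by (apply Rmult_le_compat_l; lra).
  replace (m * (/ m - 1)) with (1 - m) in H0 by (field; lra). lra.
Qed.

Lemma inv_pow_le_e u : 0 < u <= 1 -> Rpower (/ u) u <= exp 1.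
Proof.
  intros Hu. unfold Rpower. rewrite ln_Rinv by lra. apply expl'.
  assert (H := mlnm' u Hu). lra.
Qed.

Lemma Rpower_ge1 z t : 1 <= z -> 0 <= t -> 1 <= Rpower z t.
Proof.
  intros Hz Ht. unfold Rpower. rewrite <- exp_0. apply expl'.
  assert (0 <= ln z) by (rewrite <- ln_1; apply ln_le; lra). nra.
Qed.

Lemma keyL a b : 0 < a < 1 -> 0 < b <= 1 -> Rpower a b <= exp 1 * Rmax a (1 - b).
Proof.
  intros Ha Hb. set (m := Rmax a (1 - b)).
  assert (Hm1 : a <= m) by apply Rmax_l. assert (Hm2 : 1 - b <= m) by apply Rmax_r.
  assert (Hm3 : m < 1) by (unfold m; apply Rmax_lub_lt; lra).
  assert (Hlm : ln m <= 0) by (rewrite <- ln_1; apply ln_le; lra).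
  assert (Hla : ln a <= ln m) by (apply ln_le; lra).
  assert (H := mlnm' m ltac:(lra)).
  unfold Rpower. rewrite <- (exp_ln m) by lra. rewrite <- exp_plus. apply expl'.
  assert (b * ln a <= b * ln m) by (apply Rmult_le_compat_l; lra).
  assert ((1 - b) * (- ln m) <= m * (- ln m)) by (apply Rmult_le_compat_r; lra).
  nra.
Qed.

Lemma mulinv a t : 0 < a -> a * Rpower (/ a) t = Rpower a (1 - t).
Proof.
  intros Ha. unfold Rpower. rewrite ln_Rinv by lra. rewrite <- (exp_ln a) at 1 by lra.
  rewrite <- exp_plus. f_equal. ring.
Qed.

Lemma elem x y : 0 < y < x -> x < 1 ->
  Rmin (Rpower (/ y) (1 - x) / ((1 - x) / x)) (Rpower (/ (1 - x)) y / (y / (1 - y))) / 4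
  <= x * (1 - y) / (1 - x + y) * (Rpower (/ (1 - x)) (1 - x + y) + Rpower (/ y) (1 - x + y))
  /\
  x * (1 - y) / (1 - x + y) * (Rpower (/ (1 - x)) (1 - x + y) + Rpower (/ y) (1 - x + y))
  <= exp 1 * (1 + exp 1) * Rmin (Rpower (/ y) (1 - x) / ((1 - x) / x)) (Rpower (/ (1 - x)) y / (y / (1 - y))).
Proof.
  intros Hxy Hx1.
  rewrite (Rpower_plus (1 - x) y (/ (1 - x))).
  rewrite (Rpower_plus (1 - x) y (/ y)).
  set (s := 1 - x + y).
  assert (Hs : 0 < s) by (unfold s; lra).
  set (P := Rpower (/ (1 - x)) y). set (Q := Rpower (/ y) (1 - x)).
  set (e1 := Rpower (/ (1 - x)) (1 - x)). set (e2 := Rpower (/ y) y).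
  assert (Hinv1 : 1 <= / (1 - x)).
  { rewrite <- Rinv_1. apply Rinv_le_contravar; lra. }
  assert (Hinv2 : 1 <= / y).
  { rewrite <- Rinv_1. apply Rinv_le_contravar; lra. }
  assert (HP : 1 <= P) by (apply Rpower_ge1; lra).
  assert (HQ : 1 <= Q) by (apply Rpower_ge1; lra).
  assert (He1 : 1 <= e1) by (apply Rpower_ge1; lra).
  assert (He2 : 1 <= e2) by (apply Rpower_ge1; lra).
  assert (He1' : e1 <= exp 1) by (apply inv_pow_le_e; lra).
  assert (He2' : e2 <= exp 1) by (apply inv_pow_le_e; lra).
  assert (HPa : (1 - x) * P <= exp 1 * s).
  { unfold P. rewrite mulinv by lra.
    apply Rle_trans with (exp 1 * Rmax (1 - x) (1 - (1 - y))).
    apply keyL; lra. apply Rmult_le_compat_l. left; apply exp_pos.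
    apply Rmax_lub; unfold s; lra. }
  assert (HQa : y * Q <= exp 1 * s).
  { unfold Q. rewrite mulinv by lra.
    apply Rle_trans with (exp 1 * Rmax y (1 - (1 - (1 - x)))).
    apply keyL; lra. apply Rmult_le_compat_l. left; apply exp_pos.
    apply Rmax_lub; unfold s; lra. }
  set (A := Q / ((1 - x) / x)). set (B := P / (y / (1 - y))).
  assert (EA : A = Q * x / (1 - x)) by (unfold A; field; lra).
  assert (EB : B = P * (1 - y) / y) by (unfold B; field; lra).
  set (E := exp 1) in *.
  assert (HE : 1 <= E) by (unfold E; apply Rle_trans with (exp 0); [rewrite exp_0; lra | apply expl'; lra]).
  set (G := x * (1 - y) / s * (e1 * P + Q * e2)).
  assert (HG1 : G <= E * (x * (1 - y) / s * (P + Q))).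
  { unfold G. assert (0 <= x * (1 - y) / s).
    { apply Rmult_le_pos. nra. left; apply Rinv_0_lt_compat; lra. }
    assert (e1 * P + Q * e2 <= E * (P + Q)) by nra. nra. }
  assert (HG2 : x * (1 - y) / s * (P + Q) <= G).
  { unfold G. assert (0 <= x * (1 - y) / s).
    { apply Rmult_le_pos. nra. left; apply Rinv_0_lt_compat; lra. }
    assert (P + Q <= e1 * P + Q * e2) by nra. nra. }
  assert (HD : x * (1 - y) / s * (P + Q) = x * (1 - y) / s * P + x * (1 - y) / s * Q) by ring.
  assert (T1 : x * (1 - y) / s * Q <= A).
  { rewrite EA. unfold Rdiv. apply Rmult_le_reg_r with (s * (1 - x)). nra.
    replace (x * (1 - y) * / s * Q * (s * (1 - x))) with (x * Q * ((1 - y) * (1 - x))) by (field; lra).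
    replace (Q * x * / (1 - x) * (s * (1 - x))) with (x * Q * s) by (field; lra).
    apply Rmult_le_compat_l. nra. unfold s; nra. }
  assert (T2 : x * (1 - y) / s * P <= E * A).
  { rewrite EA. unfold Rdiv. apply Rmult_le_reg_r with (s * (1 - x)). nra.
    replace (x * (1 - y) * / s * P * (s * (1 - x))) with (x * (1 - y) * ((1 - x) * P)) by (field; lra).
    replace (E * (Q * x * / (1 - x)) * (s * (1 - x))) with (x * Q * (E * s)) by (field; lra).
    assert (0 <= x * (1 - y)) by nra.
    apply Rle_trans with (x * (1 - y) * (E * s)). apply Rmult_le_compat_l; lra.
    assert (0 < E * s) by nra. assert (x * (1 - y) <= x * Q) by nra.
    apply Rmult_le_compat_r; lra. }
  assert (T3 : x * (1 - y) / s * P <= B).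
  { rewrite EB. unfold Rdiv. apply Rmult_le_reg_r with (s * y). nra.
    replace (x * (1 - y) * / s * P * (s * y)) with (P * (1 - y) * (x * y)) by (field; lra).
    replace (P * (1 - y) * / y * (s * y)) with (P * (1 - y) * s) by (field; lra).
    apply Rmult_le_compat_l. nra. unfold s; nra. }
  assert (T4 : x * (1 - y) / s * Q <= E * B).
  { rewrite EB. unfold Rdiv. apply Rmult_le_reg_r with (s * y). nra.
    replace (x * (1 - y) * / s * Q * (s * y)) with (x * (1 - y) * (y * Q)) by (field; lra).
    replace (E * (P * (1 - y) * / y) * (s * y)) with ((1 - y) * P * (E * s)) by (field; lra).
    assert (0 <= x * (1 - y)) by nra.
    apply Rle_trans with (x * (1 - y) * (E * s)). apply Rmult_le_compat_l; lra.
    assert (0 < E * s) by nra. assert (x * (1 - y) <= (1 - y) * P) by nra.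
    apply Rmult_le_compat_r; lra. }
  split.
  - destruct (Rle_dec y (1 - x)) as [Hc|Hc].
    + assert (A / 4 <= x * (1 - y) / s * Q).
      { rewrite EA. unfold Rdiv. apply Rmult_le_reg_r with (4 * s * (1 - x)). nra.
        replace (Q * x * / (1 - x) * / 4 * (4 * s * (1 - x))) with (x * Q * s) by (field; lra).
        replace (x * (1 - y) * / s * Q * (4 * s * (1 - x))) with (x * Q * (4 * (1 - y) * (1 - x))) by (field; lra).
        apply Rmult_le_compat_l. nra. unfold s; nra. }
      assert (Rmin A B <= A) by apply Rmin_l.
      assert (0 <= x * (1 - y) / s * P).
      { apply Rmult_le_pos; [|lra]. apply Rmult_le_pos. nra. left; apply Rinv_0_lt_compat; lra. }
      lra.
    + assert (B / 4 <= x * (1 - y) / s * P).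
      { rewrite EB. unfold Rdiv. apply Rmult_le_reg_r with (4 * s * y). nra.
        replace (P * (1 - y) * / y * / 4 * (4 * s * y)) with (P * (1 - y) * s) by (field; lra).
        replace (x * (1 - y) * / s * P * (4 * s * y)) with (P * (1 - y) * (4 * x * y)) by (field; lra).
        apply Rmult_le_compat_l. nra. unfold s; nra. }
      assert (Rmin A B <= B) by apply Rmin_r.
      assert (0 <= x * (1 - y) / s * Q).
      { apply Rmult_le_pos; [|lra]. apply Rmult_le_pos. nra. left; apply Rinv_0_lt_compat; lra. }
      lra.
  - assert (E * (x * (1 - y) / s * (P + Q)) <= E * (1 + E) * A).
    { replace (E * (1 + E) * A) with (E * (A + E * A)) by ring.
      apply Rmult_le_compat_l; lra. }
    assert (E * (x * (1 - y) / s * (P + Q)) <= E * (1 + E) * B).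
    { replace (E * (1 + E) * B) with (E * (B + E * B)) by ring.
      apply Rmult_le_compat_l; lra. }
    unfold Rmin. destruct (Rle_dec A B); lra.
Qed.
Lemma bnd_mult a b la ua lb ub : la <= a <= ua -> lb <= b <= ub -> 0 <= la -> 0 <= lb ->
  la * lb <= a * b <= ua * ub.
Proof. intros. split; apply Rmult_le_compat; lra. Qed.

Theorem theorem4p2 (d : nat) (hd : (1 <= d)%nat) :
  exists B3 : R, 0 < B3 /\
    forall p alpha q : R,
      1 < p -> 0 < alpha -> alpha < INR d / p ->
      p <= q -> / q = / p - alpha / INR d ->
      / B3 * S_pq p q <= E_H_tilde alpha p q d /\
      E_H_tilde alpha p q d <= B3 * S_pq p q.
Proof.
  assert (Hdd : 0 < INR d) by (apply lt_0_INR; lia).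
  set (dd := INR d) in *.
  set (K := dd / 2).
  assert (HK : 0 < K) by (unfold K; lra).
  set (c0 := exp (-1) / 2). set (C0 := 2 * Cst K * K + 1).
  assert (Hc0 : 0 < c0) by (unfold c0; assert (H := exp_pos (-1)); lra).
  assert (HC0 : 0 < C0) by (unfold C0; assert (0 < Cst K) by (unfold Cst; apply exp_pos); nra).
  assert (GB : forall s, 0 < s <= K -> c0 <= Gamma s * s <= C0).
  { intros s Hs. destruct (Gamma_bounds K s HK Hs) as [H1 H2]. split.
    - apply Rmult_le_reg_r with (/ s). apply Rinv_0_lt_compat; lra.
      rewrite Rmult_assoc, Rinv_r, Rmult_1_r by lra. exact H1.
    - apply Rmult_le_reg_r with (/ s). apply Rinv_0_lt_compat; lra.
      rewrite Rmult_assoc, Rinv_r, Rmult_1_r by lra. exact H2. }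
  assert (Hom : 0 < omega_sphere d).
  { unfold omega_sphere. fold dd. destruct (GB (dd / 2) ltac:(unfold K; lra)) as [H1 _].
    assert (0 < Gamma (dd / 2)).
    { destruct (Rlt_le_dec 0 (Gamma (dd / 2))) as [H|H]; auto. nra. }
    apply Rdiv_lt_0_compat; [|auto]. assert (H' := Rpower_pos PI (dd / 2)). lra. }
  set (W := omega_sphere d / dd).
  assert (HW : 0 < W) by (unfold W; apply Rdiv_lt_0_compat; auto).
  set (LW := Rabs (ln W)).
  set (E := exp 1).
  assert (HE : 0 < E) by apply exp_pos.
  set (t1 := / Rpower (2 * PI) dd * (c0 / C0) * exp (- LW) * exp (-1)).
  set (t2 := C0 / c0 * exp LW).
  assert (Ht1 : 0 < t1).
  { unfold t1. assert (0 < / Rpower (2 * PI) dd) by (apply Rinv_0_lt_compat, Rpower_pos).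
    assert (0 < c0 / C0) by (apply Rdiv_lt_0_compat; auto).
    assert (0 < exp (- LW)) by apply exp_pos. assert (0 < exp (-1)) by apply exp_pos.
    apply Rmult_lt_0_compat; [apply Rmult_lt_0_compat; [apply Rmult_lt_0_compat|]|]; auto. }
  assert (Ht2 : 0 < t2).
  { unfold t2. apply Rmult_lt_0_compat; [apply Rdiv_lt_0_compat; auto | apply exp_pos]. }
  exists (4 / t1 + t2 * (E * (1 + E))). split.
  { assert (0 < 4 / t1) by (apply Rdiv_lt_0_compat; lra).
    assert (0 < t2 * (E * (1 + E))) by (apply Rmult_lt_0_compat; nra). lra. }
  intros p alpha q Hp Ha Hap Hpq Hq.
  assert (Hx0 : 0 < / p) by (apply Rinv_0_lt_compat; lra).
  assert (Hx1 : / p < 1) by (rewrite <- Rinv_1; apply Rinv_lt_contravar; lra).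
  assert (Hy0 : 0 < / q) by (apply Rinv_0_lt_compat; lra).
  assert (Hyx : / q < / p) by (rewrite Hq; assert (0 < alpha / dd) by (apply Rdiv_lt_0_compat; lra); lra).
  assert (Halpha : alpha = dd * (/ p - / q)) by (rewrite Hq; field; lra).
  assert (Hp' : p = / / p) by (now rewrite Rinv_inv).
  assert (Hq' : q = / / q) by (now rewrite Rinv_inv).
  set (x := / p) in *. set (y := / q) in *. clearbody x y. subst p q alpha.
  clear Hq Hpq Hap Hp.
  assert (Hix : 1 < / x) by (rewrite <- Rinv_1; apply Rinv_lt_contravar; lra).
  assert (Hiy : 1 < / y) by (rewrite <- Rinv_1; apply Rinv_lt_contravar; lra).
  assert (c1 : / (/ x / (/ x - 1)) = 1 - x) by (field; lra).
  assert (c2 : / x - 1 = (1 - x) / x) by (field; lra).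
  assert (c3 : / x / (/ x - 1) = / (1 - x)) by (field; lra).
  assert (c4 : / y / (/ y - 1) - 1 = y / (1 - y)) by (field; lra).
  assert (c5 : / (/ x * (/ y / (/ y - 1))) = x * (1 - y)) by (field; lra).
  assert (HS : S_pq (/ x) (/ y) = Rmin (Rpower (/ y) (1 - x) / ((1 - x) / x)) (Rpower (/ (1 - x)) y / (y / (1 - y)))).
  { unfold S_pq, conj_exp. rewrite c1, c3, c2, c4, Rinv_inv. reflexivity. }
  rewrite HS.
  destruct (elem x y ltac:(lra) ltac:(lra)) as [HG1 HG2].
  set (S := Rmin (Rpower (/ y) (1 - x) / ((1 - x) / x)) (Rpower (/ (1 - x)) y / (y / (1 - y)))) in *.
  set (s := 1 - x + y) in *.
  assert (Hs : 0 < s <= 1) by (unfold s; lra).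
  set (G := x * (1 - y) / s * (Rpower (/ (1 - x)) s + Rpower (/ y) s)) in *.
  set (al := dd * (x - y)).
  assert (Hal : 0 < al < dd) by (unfold al; nra).
  assert (Hg1 := GB ((dd - al) / 2) ltac:(unfold K; lra)).
  assert (Hg2 := GB (al / 2) ltac:(unfold K; lra)).
  set (g1 := Gamma ((dd - al) / 2) * ((dd - al) / 2)) in *.
  set (g2 := Gamma (al / 2) * (al / 2)) in *.
  assert (HG2pos : 0 < Gamma (al / 2)).
  { destruct (Rlt_le_dec 0 (Gamma (al / 2))) as [H|H]; auto.
    unfold g2 in Hg2. assert (Gamma (al / 2) * (al / 2) <= 0) by nra. lra. }
  set (T := / Rpower (2 * PI) al * (g1 / g2) * Rpower W s * Rpower s s).
  assert (HEq : E_H_tilde al (/ x) (/ y) d = T * G).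
  { unfold E_H_tilde, conj_exp. cbv zeta. fold dd.
    rewrite c1, c3, c5, Rinv_inv.
    replace (1 - al / dd) with s by (unfold al, s; field; lra).
    unfold T, G, g1, g2, W. unfold al, s. field.
    unfold al in HG2pos. assert (H := Rpower_pos (2 * PI) (dd * (x - y))).
    repeat split; lra. }
  rewrite HEq.
  assert (F1 : / Rpower (2 * PI) dd <= / Rpower (2 * PI) al <= 1).
  { assert (H2p : 1 <= 2 * PI) by (assert (H := PI_RGT_0); assert (H' := PI2_1); lra).
    assert (Hr1 : 1 <= Rpower (2 * PI) al) by (apply Rpower_ge1; lra).
    assert (Hr2 : Rpower (2 * PI) al <= Rpower (2 * PI) dd) by (apply Rle_Rpower; lra).
    split. apply Rinv_le_contravar; lra.
    rewrite <- Rinv_1. apply Rinv_le_contravar; lra. }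
  assert (F2 : c0 / C0 <= g1 / g2 <= C0 / c0).
  { unfold Rdiv. split; apply Rmult_le_compat; try lra.
    - left; apply Rinv_0_lt_compat; lra.
    - apply Rinv_le_contravar; lra.
    - left; apply Rinv_0_lt_compat; lra.
    - apply Rinv_le_contravar; lra. }
  assert (F3 : exp (- LW) <= Rpower W s <= exp LW).
  { unfold Rpower. assert (Rabs (s * ln W) <= LW).
    { rewrite Rabs_mult. unfold LW. rewrite (Rabs_pos_eq s) by lra.
      assert (0 <= Rabs (ln W)) by apply Rabs_pos. nra. }
    assert (H1 := Rle_abs (s * ln W)). assert (H2 := Rle_abs (- (s * ln W))).
    rewrite Rabs_Ropp in H2. split; apply expl; lra. }
  assert (F4 : exp (-1) <= Rpower s s <= 1).
  { unfold Rpower. assert (H := mlnm' s Hs).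
    assert (ln s <= 0) by (rewrite <- ln_1; apply ln_le; lra).
    split. apply expl; lra. rewrite <- exp_0. apply expl. nra. }
  assert (HT : t1 <= T <= t2).
  { unfold T, t1, t2.
    assert (P0 : 0 < / Rpower (2 * PI) dd) by (apply Rinv_0_lt_compat, Rpower_pos).
    assert (P1 : 0 < c0 / C0) by (apply Rdiv_lt_0_compat; auto).
    assert (B12 := bnd_mult _ _ _ _ _ _ F1 F2 ltac:(lra) ltac:(lra)).
    assert (B123 := bnd_mult _ _ _ _ _ _ B12 F3 ltac:(nra) ltac:(left; apply exp_pos)).
    assert (B1234 := bnd_mult _ _ _ _ _ _ B123 F4 ltac:(left; apply Rmult_lt_0_compat; [apply Rmult_lt_0_compat; auto | apply exp_pos]) ltac:(left; apply exp_pos)).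
    replace (C0 / c0 * exp LW) with (1 * (C0 / c0) * exp LW * 1) by ring. exact B1234. }
  fold E in HG2.
  assert (HS0 : 0 <= S).
  { unfold S. apply Rmin_case; left; apply Rdiv_lt_0_compat; try apply Rpower_pos;
    apply Rdiv_lt_0_compat; lra. }
  assert (HG0 : 0 <= G) by nra.
  set (B3 := 4 / t1 + t2 * (E * (1 + E))).
  assert (HB : 4 / t1 <= B3).
  { unfold B3. assert (0 < t2 * (E * (1 + E))) by (apply Rmult_lt_0_compat; nra). lra. }
  split.
  - assert (HiB : / B3 <= t1 / 4).
    { replace (t1 / 4) with (/ (4 / t1)) by (field; lra). apply Rinv_le_contravar; auto.
      apply Rdiv_lt_0_compat; lra. }
    apply Rle_trans with (t1 / 4 * S). apply Rmult_le_compat_r; auto.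
    apply Rle_trans with (t1 * G). nra.
    apply Rmult_le_compat_r; lra.
  - apply Rle_trans with (t2 * G). apply Rmult_le_compat_r; lra.
    apply Rle_trans with (t2 * (E * (1 + E) * S)). apply Rmult_le_compat_l; lra.
    assert (t2 * (E * (1 + E)) <= B3) by (unfold B3; assert (0 < 4 / t1) by (apply Rdiv_lt_0_compat; lra); lra).
    replace (t2 * (E * (1 + E) * S)) with (t2 * (E * (1 + E)) * S) by ring.
    apply Rmult_le_compat_r; auto.
Qed.
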